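(* Let $m\geq 3$ be an odd integer, let $g:\mathrm{GF}(2^m)\to\mathrm{GF}(2^m)$ be an almost bent function with $g(0)=0$, let $A$ be an additive subgroup of $(\mathrm{GF}(2^m),+)$ of order $2^r$ with $1\le r\le m$, let $$\mathcal{C}_{(g,A)}=\{(\mathrm{Tr}_1^m(ag(x)+bx))_{x\in \mathrm{GF}(2^m)^*}: a\in A,\ b\in \mathrm{GF}(2^m)\},$$ and let $\mathcal{D}=\overline{\mathcal{C}_{(g,A)}^\perp}^\perp$, a binary code of length $2^m$ whose coordinates are indexed by $\mathcal{P}=\{0,1,\dots,2^m-1\}$. Its weight distribution is: $A_0=1$, $A_{2^{m-1}-2^{(m-1)/2}}=2^{m-1}(2^r-1)$, $A_{2^{m-1}}=2^{m+r}+2^m-2$, $A_{2^{m-1}+2^{(m-1)/2}}=2^{m-1}(2^r-1)$, $A_{2^m}=1$, and $A_k=0$ otherwise. For any $k$ with $A_k\ne0$, let $\mathcal{B}$ be the set of supports of the codewords of $\mathcal{D}$ of Hamming weight $k$. If $r=m$, then $(\mathcal{P},\mathcal{B})$ is a $3$-$(2^m,k,\lambda)$ design with $$\lambda=\frac{k(k-1)(k-2)A_k}{2^m(2^m-1)(2^m-2)}.$$ If $r\neq m$, then $(\mathcal{P},\mathcal{B})$ is a $1$-$(2^m,k,\lambda)$ design with $\lambda=\frac{kA_k}{2^m}$.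
   Context: $\mathrm{Tr}_1^m$ is the absolute trace from $\mathrm{GF}(2^m)$ to $\mathrm{GF}(2)$. A function $g:\mathrm{GF}(2^m)\to\mathrm{GF}(2^m)$ is almost bent if $\sum_{x\in\mathrm{GF}(2^m)}(-1)^{\mathrm{Tr}_1^m(ag(x)+bx)}\in\{0,\pm2^{(m+1)/2}\}$ for all $a\neq0$, $b$. For a binary linear code $\mathcal{C}$ of length $n$, $\mathcal{C}^\perp$ is its dual and $\overline{\mathcal{C}}$ is its extended code of length $n+1$, obtained by appending the overall parity coordinate $\sum_i c_i$ to each codeword. The support of a codeword $c=(c_0,\dots,c_{n-1})$ is $\{i: c_i\neq 0\}$. A $t$-$(n,k,\lambda)$ design is a pair $(\mathcal{P},\mathcal{B})$ where $\mathcal{P}$ is a set of $n$ points and $\mathcal{B}$ a set of $k$-subsets of $\mathcal{P}$ (blocks) such that every $t$-subset of $\mathcal{P}$ is contained in exactly $\lambda$ blocks. *)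

(* Defs.v *)
From HB Require Import structures.
From mathcomp Require Import all_boot all_order all_algebra all_field.
Set Implicit Arguments. Unset Strict Implicit. Unset Printing Implicit Defensive.
Import GRing.Theory Num.Theory.
Local Open Scope ring_scope.

Definition trF (F : finFieldType) (m : nat) (x : F) : F :=
  \sum_(i < m) x ^+ (2 ^ i).

(* The trace as an element of GF(2) = 'F_2 (it is 0 or 1 in F). *)
Definition tr2 (F : finFieldType) (m : nat) (x : F) : 'F_2 :=
  if trF m x == 0 then 0 else 1.

Definition walsh (F : finFieldType) (m : nat) (g : F -> F) (a b : F) : int :=
  \sum_(x : F) (if trF m (a * g x + b * x) == 0 then 1 else -1).

Definition almost_bent (F : finFieldType) (m : nat) (g : F -> F) : Prop :=
  forall a b : F, a != 0 ->
    walsh m g a b \in [:: 0; (2 ^ (m.+1 %/ 2))%:Z; - (2 ^ (m.+1 %/ 2))%:Z].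

Definition word (I : finType) := {ffun I -> 'F_2}.

Definition dotw (I : finType) (x y : word I) : 'F_2 := \sum_(i : I) x i * y i.

Definition dual_code (I : finType) (C : {set word I}) : {set word I} :=
  [set y : word I | [forall x in C, dotw x y == 0]].

(* Extension by the overall parity coordinate, indexed by None. *)
Definition extend_word (I : finType) (c : word I) : word (option I) :=
  [ffun o => match o with Some i => c i | None => \sum_(i : I) c i end].

Definition extended_code (I : finType) (C : {set word I}) : {set word (option I)} :=
  [set extend_word c | c in C].

Definition support (I : finType) (c : word I) : {set I} := [set i | c i != 0].
Definition wt (I : finType) (c : word I) : nat := #|support c|.

Definition wdist (I : finType) (C : {set word I}) (k : nat) : nat :=
  #|[set c in C | wt c == k]|.

Definition blocks (I : finType) (C : {set word I}) (k : nat) : {set {set I}} :=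
  [set support c | c in C & wt c == k].

Definition nzF (F : finFieldType) := {x : F | x != 0}.

Definition cw (F : finFieldType) (m : nat) (g : F -> F) (a b : F) : word (nzF F) :=
  [ffun x : nzF F => tr2 m (a * g (val x) + b * val x)].

Definition code_gA (F : finFieldType) (m : nat) (g : F -> F) (A : {set F})
  : {set word (nzF F)} :=
  [set cw m g a b | a in A, b in F].

Definition code_D (F : finFieldType) (m : nat) (g : F -> F) (A : {set F})
  : {set word (option (nzF F))} :=
  dual_code (extended_code (dual_code (code_gA m g A))).

(* Main.v *)
Require Import Defs.
From HB Require Import structures.
From mathcomp Require Import all_boot all_order all_algebra all_field.
From mathcomp Require Import zify ring lra.
Import GRing.Theory Num.Theory.
Set Implicit Arguments. Unset Strict Implicit. Unset Printing Implicit Defensive.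
Local Open Scope ring_scope.

Lemma sumF2 (f : 'F_2 -> int) : \sum_(t : 'F_2) f t = f 0 + f 1.
Proof.
rewrite big_ord_recl big_ord_recl big_ord0 addr0.
by congr (f _ + f _); apply: val_inj.
Qed.

Lemma F2cases (t : 'F_2) : t = 0 \/ t = 1.
Proof.
case: t => [[|[|k]] Hk]; [left|right|by []]; by apply: val_inj.
Qed.

Definition eps (t : 'F_2) : int := if t == 0 then 1 else -1.

Lemma eps0 : eps 0 = 1. Proof. by []. Qed.
Lemma eps1 : eps 1 = -1. Proof. by []. Qed.

Lemma epsD t u : eps (t + u) = eps t * eps u.
Proof. by case: (F2cases t) => ->; case: (F2cases u) => ->. Qed.

Lemma epsM t : eps t * eps t = 1.
Proof. by case: (F2cases t) => ->. Qed.

Lemma F2xx (t : 'F_2) : t + t = 0.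
Proof. by case: (F2cases t) => ->; apply/eqP. Qed.

Lemma flip_sum (T : finType) (P : pred T) (f : T -> int) (s : T -> T) :
  injective s -> (forall x, P (s x) = P x) -> (forall x, f (s x) = - f x) ->
  \sum_(x | P x) f x = 0.
Proof.
move=> si Ps fs.
have : \sum_(x | P x) f x = - \sum_(x | P x) f x.
  rewrite {1}(reindex_inj si) /= -sumrN.
  by apply: eq_big => x; rewrite ?Ps // => _; rewrite fs.
lia.
Qed.

Lemma card_sumZ (T : finType) (D : {set T}) (Q : pred T) :
  (#|[set x in D | Q x]|)%:Z = \sum_(x in D) (Q x)%:Z.
Proof.
rewrite -sum1_card (big_morph Posz PoszD (erefl _)) big_mkcond [RHS]big_mkcond.
by apply: eq_bigr => x _; rewrite inE; case: (x \in D); case: (Q x).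
Qed.

Lemma card_sumZ' (T : finType) (Q : pred T) :
  (#|[set x | Q x]|)%:Z = \sum_x (Q x)%:Z.
Proof.
rewrite -sum1_card (big_morph Posz PoszD (erefl _)) big_mkcond [RHS]big_mkcond.
by apply: eq_bigr => x _; rewrite inE; case: (Q x).
Qed.

Lemma F2nz (t : 'F_2) : t != 0 -> t = 1.
Proof. by case: (F2cases t) => ->. Qed.

Lemma F2addK (x t : 'F_2) : x + t + t = x.
Proof. by rewrite -addrA F2xx addr0. Qed.

Lemma eps_nz (z : 'F_2) : eps z = 1 - 2 * (z != 0)%:Z.
Proof. by case: (F2cases z) => ->. Qed.

Lemma sum_option (I : finType) (V : zmodType) (f : option I -> V) :
  \sum_o f o = f None + \sum_i f (Some i).
Proof.
rewrite (bigD1 None) //=; congr (_ + _).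
rewrite -(big_imset _ (in2W (@Some_inj _))) /=.
apply: eq_bigl => o; case: o => [i|] /=.
  by apply/esym/imsetP; exists i.
by apply/esym/imsetP => -[i _].
Qed.

Section Codes.
Variable I : finType.

Lemma dotwC (x y : word I) : dotw x y = dotw y x.
Proof. by apply: eq_bigr => i _; rewrite mulrC. Qed.

Lemma dotwDl (x y z : word I) : dotw (x + y) z = dotw x z + dotw y z.
Proof. by rewrite /dotw -big_split; apply: eq_bigr => i _; rewrite ffunE mulrDl. Qed.

Lemma dotw0l (y : word I) : dotw 0 y = 0.
Proof. by rewrite /dotw big1 // => i _; rewrite ffunE mul0r. Qed.

Lemma wxx (c : word I) : c + c = 0.
Proof. by apply/ffunP => i; rewrite !ffunE F2xx. Qed.

Definition subgrp (C : {set word I}) :=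
  0 \in C /\ forall x y, x \in C -> y \in C -> x + y \in C.

Lemma dual_subgrp C : subgrp (dual_code C).
Proof.
split.
  by rewrite inE; apply/forall_inP => x _; rewrite dotwC dotw0l.
move=> y z; rewrite !inE => /forall_inP Hy /forall_inP Hz; apply/forall_inP => x xC.
by rewrite dotwC dotwDl !(dotwC _ x) (eqP (Hy x xC)) (eqP (Hz x xC)) addr0.
Qed.

Lemma card_word : #|word I| = (2 ^ #|I|)%N.
Proof. by rewrite card_ffun card_Fp. Qed.

Lemma sum_char_C (C : {set word I}) (y : word I) : subgrp C ->
  \sum_(c in C) eps (dotw c y) = if y \in dual_code C then #|C|%:Z else 0.
Proof.
move=> [C0 CD]; case: ifP => [|yn].
  rewrite inE => /forall_inP Hy.
  rewrite (eq_bigr (fun _ => 1)); first by rewrite sumr_const natz.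
  by move=> c cC; rewrite (eqP (Hy c cC)).
move: yn; rewrite inE => /negbT; rewrite negb_forall_in => /exists_inP [c0 c0C nz].
apply: (@flip_sum _ (mem C) _ (fun c => c + c0)); first exact: addIr.
  move=> c /=; apply/idP/idP => [H|H]; last exact: CD.
  have -> : c = (c + c0) + c0 by rewrite -addrA wxx addr0.
  exact: CD.
move=> c; rewrite dotwDl epsD (F2nz nz) eps1 mulrN1 //.
Qed.

Lemma sum_char_y (c : word I) :
  \sum_(y : word I) eps (dotw c y) = if c == 0 then (2 ^ #|I|)%N%:Z else 0.
Proof.
case: eqP => [->|/eqP cnz] /=.
  rewrite (eq_bigr (fun _ => 1)); last by move=> y _; rewrite dotw0l.
  by rewrite sumr_const natz card_word.
case: (pickP (fun i => c i != 0)) => [i ci|H]; last first.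
  case/eqP: cnz; apply/ffunP => i; rewrite ffunE; apply/eqP.
  by have := H i; rewrite /= => /negbFE.
pose d : word I := [ffun j => (j == i)%:R].
have cd : dotw c d = 1.
  rewrite /dotw (bigD1 i) //= big1 ?addr0.
    by rewrite ffunE eqxx mulr1 (F2nz ci).
  by move=> j /negbTE ji; rewrite ffunE ji mulr0.
have HH : forall y, eps (dotw c (y + d)) = - eps (dotw c y).
  by move=> y; rewrite dotwC dotwDl epsD !(dotwC _ c) cd eps1 mulrN1.
exact: (@flip_sum _ predT (fun y => eps (dotw c y)) (fun y => y + d) (@addIr _ d) (fun _ => erefl) HH).
Qed.

Lemma card_dual (C : {set word I}) : subgrp C ->
  (#|C| * #|dual_code C|)%N = (2 ^ #|I|)%N.
Proof.
move=> sC; apply/eqP; rewrite -eqz_nat; apply/eqP.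
transitivity (\sum_(y : word I) \sum_(c in C) eps (dotw c y)).
  under eq_bigr => y _ do rewrite sum_char_C //.
  rewrite -big_mkcond /= sumr_const -mulr_natr natz -PoszM.
  by congr Posz; congr (_ * _); apply: eq_card => y.
rewrite exchange_big /=.
under eq_bigr => c _ do rewrite sum_char_y.
rewrite (bigD1 (0 : word I)) ?eqxx //=; last by case: sC.
by rewrite big1 ?addr0 // => c /andP [_ /negbTE ->].
Qed.

Lemma dual_dual (C : {set word I}) : subgrp C -> dual_code (dual_code C) = C.
Proof.
move=> sC; apply/esym/eqP; rewrite eqEcard; apply/andP; split.
  apply/subsetP => c cC; rewrite inE; apply/forall_inP => y.
  by rewrite inE => /forall_inP Hy; rewrite dotwC Hy.
have h1 := card_dual sC.
have h2 := card_dual (dual_subgrp C).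
have pos : (0 < #|dual_code C|)%N.
  by apply/card_gt0P; exists 0; case: (dual_subgrp C).
rewrite -h1 in h2.
have : (#|dual_code C| * #|dual_code (dual_code C)| = #|dual_code C| * #|C|)%N.
  by rewrite h2 mulnC.
by move/eqP; rewrite eqn_mul2l eqn0Ngt pos /= => /eqP ->.
Qed.

End Codes.

Lemma support_inj (I : finType) (c c' : word I) : Defs.support c = Defs.support c' -> c = c'.
Proof.
move=> H.
suff E : forall i, c i = c' i by apply/ffunP.
move=> i.
have := congr1 (fun S : {set I} => i \in S) H; rewrite /= !inE.
by case: (F2cases (c i)) => ->; case: (F2cases (c' i)) => ->.
Qed.

Lemma card_blocks (I : finType) (C : {set word I}) (k : nat) (S : {set I}) :
  #|[set b in blocks C k | S \subset b]| =
  #|[set c in C | (wt c == k) && (S \subset Defs.support c)]|.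
Proof.
rewrite -(@card_imset _ _ (@Defs.support I) _ (fun c c' => @support_inj I c c')); apply: eq_card => b.
rewrite inE; apply/andP/imsetP => [[/imsetP [c cP ->] Sc]|[c]].
  exists c => //; rewrite !inE in cP *; move/andP: cP => [cC wk].
  by rewrite cC wk Sc.
rewrite inE => /and3P [cC wk Sc] ->; split => //; apply: imset_f.
by rewrite inE cC wk.
Qed.

Lemma blocks_card (I : finType) (C : {set word I}) (k : nat) b :
  b \in blocks C k -> #|b| = k.
Proof.
by case/imsetP => c; rewrite inE => /andP [_ /eqP <-] ->.
Qed.

Lemma card3P (T : finType) (S : {set T}) : #|S| = 3%N ->
  exists p q r, [/\ p != q, p != r, q != r & S = p |: (q |: [set r])].
Proof.
move=> S3.
have : (0 < #|S|)%N by rewrite S3.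
case/card_gt0P => p pS.
have := cardsD1 p S; rewrite pS S3 add1n => -[S2].
have /cards2P [q [r [qr E]]] : #|S :\ p| == 2%N by rewrite -S2.
exists p, q, r.
have qS : q \in S :\ p by rewrite E !inE eqxx.
have rS : r \in S :\ p by rewrite E !inE eqxx orbT.
split => //.
- by move: qS; rewrite !inE eq_sym => /andP [].
- by move: rS; rewrite !inE eq_sym => /andP [].
- by rewrite -E setD1K.
Qed.

Lemma double_count (T : finType) (B : {set {set T}}) (t k : nat) :
  (forall b : {set T}, b \in B -> #|b| = k) ->
  (forall S S' : {set T}, #|S| = t -> #|S'| = t ->
     #|[set b in B | S \subset b]| = #|[set b in B | S' \subset b]|) ->
  forall S : {set T}, #|S| = t ->
  (#|[set b in B | S \subset b]| * 'C(#|T|, t) = #|B| * 'C(k, t))%N.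
Proof.
move=> Bk Hc S St.
have E1 : (\sum_(S' : {set T} | #|S'| == t) #|[set b in B | S' \subset b]| =
           #|[set b in B | S \subset b]| * 'C(#|T|, t))%N.
  rewrite (eq_bigr (fun _ => #|[set b in B | S \subset b]|)); last first.
    by move=> S' /eqP St'; apply: Hc.
  rewrite sum_nat_const -card_draws mulnC; congr (_ * _).
  by apply: eq_card => S'; rewrite inE.
have E2 : (\sum_(S' : {set T} | #|S'| == t) #|[set b in B | S' \subset b]| =
           #|B| * 'C(k, t))%N.
  transitivity (\sum_(S' : {set T} | #|S'| == t) \sum_(b in B) ((S' \subset b) : nat))%N.
    apply: eq_bigr => S' _.
    rewrite -sum1_card [LHS]big_mkcond [RHS]big_mkcond; apply: eq_bigr => b _.
    by rewrite inE; case: (b \in B); case: (S' \subset b).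
  rewrite exchange_big /=.
  rewrite (eq_bigr (fun _ => 'C(k, t))); first by rewrite sum_nat_const.
  move=> b bB; rewrite -(Bk b bB) -cards_draws -sum1_card.
  rewrite [LHS]big_mkcond [RHS]big_mkcond; apply: eq_bigr => S' _.
  by rewrite inE; case: (#|S'| == t); case: (S' \subset b).
by rewrite -E1 E2.
Qed.

Lemma card_blocks_all (I : finType) (C : {set word I}) (k : nat) :
  #|blocks C k| = wdist C k.
Proof.
rewrite /blocks (@card_imset _ _ (@Defs.support I) _ (fun c c' => @support_inj I c c')).
by apply: eq_card => c; rewrite !inE.
Qed.
Section Trace.
Variable F : finFieldType.
Variable m : nat.
Hypothesis cardF : #|F| = (2 ^ m)%N.
Hypothesis m_gt0 : (0 < m)%N.

Lemma char2F : (2%N \in [pchar F]).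
Proof. by apply: card_finPcharP cardF _. Qed.

Lemma addxx (x : F) : x + x = 0.
Proof. by rewrite -mulr2n -mulr_natr (pcharf0 char2F) mulr0. Qed.

Lemma oppF (x : F) : - x = x.
Proof. by apply/esym/eqP; rewrite -addr_eq0 addxx. Qed.

Lemma addK2 (x y : F) : x + y + y = x.
Proof. by rewrite -addrA addxx addr0. Qed.

Lemma eqF_add0 (x y : F) : (x + y == 0) = (x == y).
Proof. by rewrite addr_eq0 oppF. Qed.

Lemma sqrD (x y : F) : (x + y) ^+ 2 = x ^+ 2 + y ^+ 2.
Proof. by rewrite sqrrD mulr2n addxx addr0. Qed.

Lemma exp2D (x y : F) i : (x + y) ^+ (2 ^ i) = x ^+ (2 ^ i) + y ^+ (2 ^ i).
Proof.
elim: i => [|i IH]; first by rewrite expn0 !expr1.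
by rewrite expnSr !exprM IH sqrD.
Qed.

Lemma trF_add (x y : F) : trF m (x + y) = trF m x + trF m y.
Proof. by rewrite /trF -big_split; apply: eq_bigr => i _; rewrite exp2D. Qed.

Lemma trF0 : trF m (0 : F) = 0.
Proof. by rewrite /trF big1 // => i _; rewrite expr0n expn_eq0. Qed.

Lemma sqr_sum (I : finType) (f : I -> F) : (\sum_i f i) ^+ 2 = \sum_i f i ^+ 2.
Proof.
elim/big_rec2: _ => [|i y1 y2 _ <-]; first by rewrite expr0n.
by rewrite sqrD.
Qed.

Lemma trF_sq (x : F) : trF m x ^+ 2 = trF m x.
Proof.
rewrite /trF sqr_sum.
under eq_bigr => i _ do rewrite -exprM -expnSr.
have [m' Em] : exists m', m = m'.+1 by exists m.-1; rewrite prednK.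
move: cardF; rewrite Em => cF.
rewrite big_ord_recr big_ord_recl /= -cF expf_card expn0 expr1 addrC.
by congr (_ + _); apply: eq_bigr => i _; rewrite lift0.
Qed.

Lemma trF01 (x : F) : (trF m x == 0) || (trF m x == 1).
Proof.
have : trF m x * (trF m x - 1) == 0 by rewrite mulrBr mulr1 -expr2 trF_sq subrr.
by rewrite mulf_eq0 subr_eq0.
Qed.

Lemma size_trP k : size (\sum_(i < k.+1) 'X^(2^i) : {poly F}) = (2^k).+1.
Proof.
elim: k => [|k IH]; first by rewrite big_ord1 size_polyXn.
rewrite big_ord_recr /= addrC size_polyDl size_polyXn //.
by rewrite IH ltnS ltn_exp2l.
Qed.

Lemma trF_nz : exists c : F, trF m c != 0.
Proof.
case: (pickP (fun c : F => trF m c != 0)) => [c Hc|H]; first by exists c.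
have [m' Em] : exists m', m = m'.+1 by exists m.-1; rewrite prednK.
pose P : {poly F} := \sum_(i < m) 'X^(2^i).
have sP : size P = (2 ^ m').+1 by rewrite /P Em size_trP.
have Pnz : P != 0 by rewrite -size_poly_eq0 sP.
have allr : all (root P) (enum F).
  apply/allP => x _; rewrite rootE /P horner_sum.
  have -> : \sum_(i < m) ('X^(2^i)).[x] = trF m x.
    by apply: eq_bigr => i _; rewrite hornerXn.
  by have := H x; rewrite /= => /negbFE.
have := max_poly_roots Pnz allr (enum_uniq F).
rewrite -cardE cardF sP Em expnS.
have : (0 < 2 ^ m')%N by rewrite expn_gt0.
lia.
Qed.

Definition ech (x : F) : int := if trF m x == 0 then 1 else -1.

Lemma echD (x y : F) : ech (x + y) = ech x * ech y.
Proof.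
rewrite /ech trF_add.
case/orP: (trF01 x) => /eqP->; case/orP: (trF01 y) => /eqP->;
  rewrite ?addr0 ?add0r ?eqxx ?oner_eq0 /= ?mulr1 ?mul1r //.
by rewrite addxx eqxx mulrNN mulr1.
Qed.

Lemma ech0 : ech 0 = 1.
Proof. by rewrite /ech trF0 eqxx. Qed.

Lemma echM (x : F) : ech x * ech x = 1.
Proof. by rewrite /ech; case: ifP => _; rewrite ?mulr1 ?mulrNN ?mulr1. Qed.

Lemma sum_ech : \sum_(x : F) ech x = 0.
Proof.
have [c Hc] := trF_nz.
apply: (@flip_sum _ predT _ (fun x => x + c)) => //; first exact: addIr.
by move=> x; rewrite echD /ech (negbTE Hc) mulrN1.
Qed.

Lemma orth (u : F) : \sum_b ech (b * u) = if u == 0 then (#|F|)%:Z else 0.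
Proof.
case: eqP => [->|/eqP nz].
  under eq_bigr => b _ do rewrite mulr0 ech0.
  by rewrite sumr_const natz.
transitivity (\sum_(x : F) ech x); last exact: sum_ech.
by symmetry; rewrite (reindex_inj (mulIf nz)).
Qed.

Lemma orthl (u : F) : \sum_b ech (u * b) = if u == 0 then (#|F|)%:Z else 0.
Proof. by rewrite -orth; apply: eq_bigr => b _; rewrite mulrC. Qed.

Definition fourier (h : F -> int) (b : F) : int := \sum_u ech (b * u) * h u.

Lemma fourier_inv (h : F -> int) (P : F) : \sum_b fourier h b * ech (b * P) = #|F|%:Z * h P.
Proof.
under eq_bigr => b _ do rewrite /fourier mulr_suml.
rewrite exchange_big /=.
rewrite (eq_bigr (fun u => h u * (if u + P == 0 then #|F|%:Z else 0))); last first.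
  move=> u _; rewrite -orth mulr_sumr; apply: eq_bigr => b _.
  by rewrite mulrDr echD; ring.
rewrite (bigD1 P) //= addxx eqxx big1 ?addr0; first by rewrite mulrC.
by move=> u /negbTE neq; rewrite eqF_add0 neq mulr0.
Qed.

Lemma parseval (h : F -> int) : \sum_b fourier h b ^+ 2 = #|F|%:Z * \sum_u h u ^+ 2.
Proof.
under eq_bigr => b _ do rewrite expr2 {2}/fourier mulr_sumr.
rewrite exchange_big /= mulr_sumr; apply: eq_bigr => u _.
under eq_bigr => b _ do rewrite mulrA.
by rewrite -mulr_suml fourier_inv expr2 mulrA.
Qed.

End Trace.

Definition phiP (F : finFieldType) (o : option (nzF F)) : F :=
  if o is Some x then val x else 0.

Definition PhiW (F : finFieldType) (m : nat) (g : F -> F) (a b : F) (t : 'F_2)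
  : word (option (nzF F)) :=
  [ffun o => tr2 m (a * g (phiP o) + b * phiP o) + t].

Definition Phi' (F : finFieldType) (m : nat) (g : F -> F) (tau : F * F * 'F_2) :=
  PhiW m g tau.1.1 tau.1.2 tau.2.

Definition restr (F : finFieldType) (w : word (option (nzF F))) : word (nzF F) :=
  [ffun i => w (Some i) + w None].

Definition dom (F : finFieldType) (A : {set F}) : {set F * F * 'F_2} :=
  [set tau | tau.1.1 \in A].

Definition sW (m : nat) : int := (2 ^ (m.+1 %/ 2))%:Z.

Section Walsh.
Variable F : finFieldType.
Variables (m : nat) (g : F -> F).
Hypothesis cardF : #|F| = (2 ^ m)%N.
Hypothesis m_ge3 : (3 <= m)%N.
Hypothesis m_odd : odd m.
Hypothesis AB : almost_bent m g.
Hypothesis g0 : g 0 = 0.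

Let m_gt0 : (0 < m)%N. Proof. by apply: leq_trans m_ge3. Qed.
Let echD' := echD cardF m_gt0.
Let orth' := orth cardF m_gt0.
Let orthl' := orthl cardF m_gt0.
Let echM' := @echM F m.
Let fourier_inv' := fourier_inv cardF m_gt0.
Let parseval' := parseval cardF m_gt0.
Let eqF_add0' := eqF_add0 cardF.
Let addxx' := addxx cardF.

Local Notation n := (#|F|%:Z).
Local Notation W := (walsh m g).
Local Notation s := (sW m).

Lemma n_gt0 : (0 < #|F|)%N.
Proof. by rewrite cardF expn_gt0. Qed.

Lemma s2 : s * s = (2 * #|F|)%N%:Z.
Proof.
have H : (m %% 2 = 1)%N by rewrite modn2 m_odd.
have hk : (m.+1 %/ 2 + m.+1 %/ 2 = m.+1)%N by lia.
by rewrite /sW -PoszM -expnD hk expnS cardF.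
Qed.

Lemma s_lt_n : (2 ^ (m.+1 %/ 2) < #|F|)%N.
Proof. by rewrite cardF ltn_exp2l //; lia. Qed.

Lemma s_gt0 : (0 < 2 ^ (m.+1 %/ 2))%N.
Proof. by rewrite expn_gt0. Qed.

Lemma walshE (a b : F) : W a b = fourier m (fun x => ech m (a * g x)) b.
Proof.
rewrite /walsh /fourier; apply: eq_bigr => x _.
by rewrite -echD' [b * x + _]addrC.
Qed.

Definition Rac (a u : F) : int := \sum_x ech m (a * g x) * ech m (a * g (x + u)).

Lemma walsh_sq (a b : F) : W a b ^+ 2 = fourier m (Rac a) b.
Proof.
rewrite walshE expr2 /fourier mulr_suml.
under eq_bigr => x _ do rewrite mulr_sumr (reindex_inj (addrI x)) /=.
rewrite exchange_big /=; apply: eq_bigr => u _.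
rewrite /Rac mulr_sumr; apply: eq_bigr => x _.
rewrite mulrDr echD'.
transitivity (ech m (b*x) * ech m (b*x) * (ech m (b*u) * (ech m (a * g x) * ech m (a * g (x+u))))); first ring.
by rewrite echM' mul1r.
Qed.

Lemma RacE (a u : F) : Rac a u = \sum_x ech m (a * (g x + g (x + u))).
Proof. by apply: eq_bigr => x _; rewrite mulrDr echD'. Qed.

Lemma Rac0 (a : F) : Rac a 0 = n.
Proof.
rewrite /Rac (eq_bigr (fun _ => 1)); last by move=> x _; rewrite addr0 echM'.
by rewrite sumr_const natz.
Qed.

Lemma W0 (b : F) : W 0 b = if b == 0 then n else 0.
Proof.
rewrite /walsh; under eq_bigr => x _ do rewrite mul0r add0r.
exact: orthl'.
Qed.

Lemma Wvals (a b : F) : a != 0 -> [|| W a b == 0, W a b == s | W a b == - s].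
Proof. by move=> /(AB b); rewrite !inE. Qed.

Lemma W_sq_vals (a b : F) : a != 0 -> (W a b == 0) || (W a b ^+ 2 == s * s).
Proof.
by move/(Wvals b); case/or3P => /eqP ->; rewrite ?sqrrN expr2 ?eqxx ?orbT.
Qed.

Lemma sumW2 (a : F) : \sum_b W a b ^+ 2 = n * n.
Proof.
under eq_bigr => b _ do rewrite walshE.
rewrite parseval' (eq_bigr (fun _ => 1)); last by move=> x _; rewrite expr2 echM'.
by rewrite sumr_const natz.
Qed.

Lemma sum_nz_const (c : int) : \sum_(a : F | a != 0) c = c * (n - 1).
Proof.
rewrite sumr_const cardC1 -mulr_natr natz.
have := n_gt0; case: #|F| => // k _ /=.
by congr (_ * _); lia.
Qed.

Lemma sumW4_AB : \sum_a \sum_b W a b ^+ 4 = n ^+ 4 + (n - 1) * (s * s) * (n * n).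
Proof.
rewrite (bigD1 0) //=; congr (_ + _).
  rewrite (bigD1 0) //= big1 ?addr0; first by rewrite W0 eqxx.
  by move=> b /negbTE nb; rewrite W0 nb expr0n.
rewrite (eq_bigr (fun _ => (s * s) * (n * n))); last first.
  move=> a anz; rewrite -(sumW2 a) mulr_sumr; apply: eq_bigr => b _.
  case/orP: (W_sq_vals b anz) => [/eqP -> | /eqP H].
    by rewrite expr0n /= expr2 mulr0.
  by rewrite (_ : 4%N = (2 * 2)%N) // exprM H expr2.
by rewrite (sum_nz_const (s * s * (n * n))); ring.
Qed.

Definition dlt (u x : F) : nat := #|[set y | g y + g (y + u) == g x + g (x + u)]|.

Lemma sumW4_dlt : \sum_a \sum_b W a b ^+ 4 = n * n * \sum_u \sum_x (dlt u x)%:Z.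
Proof.
transitivity (\sum_a n * \sum_u Rac a u ^+ 2).
  apply: eq_bigr => a _; rewrite -parseval'; apply: eq_bigr => b _.
  by rewrite -walsh_sq -exprM.
rewrite -mulr_sumr exchange_big /= -mulrA; congr (_ * _).
rewrite mulr_sumr; apply: eq_bigr => u _.
transitivity (\sum_a \sum_x \sum_y ech m (a * ((g x + g (x + u)) + (g y + g (y + u))))).
  apply: eq_bigr => a _; rewrite RacE expr2 mulr_suml; apply: eq_bigr => x _.
  by rewrite mulr_sumr; apply: eq_bigr => y _; rewrite -echD' -mulrDr.
rewrite exchange_big /= mulr_sumr; apply: eq_bigr => x _.
rewrite exchange_big /=.
under eq_bigr => y _ do rewrite orth'.
rewrite -big_mkcond /=.
rewrite (eq_bigl (fun y => y \in [set y | g y + g (y + u) == g x + g (x + u)])); last first.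
  by move=> y; rewrite inE eqF_add0' eq_sym.
by rewrite sumr_const -mulr_natr natz.
Qed.

Lemma dlt0 (x : F) : dlt 0 x = #|F|.
Proof.
rewrite /dlt (eq_finset (fun _ => true)) ?cardsT // => y.
by rewrite !addr0 !addxx' eqxx.
Qed.

Lemma dlt_ge2 (u x : F) : u != 0 -> (2 <= dlt u x)%N.
Proof.
move=> unz.
have -> : 2%N = #|[set x; x + u]|.
  rewrite cards2; case: eqP => // H.
  have u0 : u = 0 by apply: (addrI x); rewrite addr0 -H.
  by rewrite u0 eqxx in unz.
apply: subset_leq_card; apply/subsetP => y; rewrite !inE => /orP[] /eqP ->.
  by [].
by rewrite -addrA addxx' addr0 addrC.
Qed.

Lemma apn (u x : F) : u != 0 -> dlt u x = 2%N.
Proof.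
have tot : \sum_u \sum_x (dlt u x)%:Z = n * n + (n - 1) * (2 * #|F|)%N%:Z.
  apply: (@mulfI _ (n * n)); first by rewrite mulf_eq0 orbb; have := n_gt0; lia.
  rewrite -sumW4_dlt sumW4_AB s2; ring.
have e0 : \sum_x (dlt 0 x)%:Z = n * n.
  rewrite (eq_bigr (fun _ => n)); last by move=> y _; rewrite dlt0.
  by rewrite sumr_const -mulr_natr natz.
have e2 : \sum_(v : F | v != 0) \sum_(y : F) (2%N%:Z) = (n - 1) * (2 * #|F|)%N%:Z.
  rewrite (eq_bigr (fun _ => (2 * #|F|)%N%:Z)); last first.
    by move=> v _; rewrite sumr_const -mulr_natr natz -PoszM mulnC.
  by rewrite (sum_nz_const ((2 * #|F|)%N%:Z)) mulrC.
move=> unz.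
have H1 : \sum_(v : F | v != 0) \sum_(y : F) ((dlt v y)%:Z - 2%N%:Z) = 0.
  rewrite (eq_bigr (fun v => \sum_(y : F) (dlt v y)%:Z - \sum_(y : F) 2%N%:Z)); last first.
    by move=> v _; rewrite sumrB.
  rewrite sumrB e2.
  move: tot; rewrite (bigD1 0) //= e0.
  move=> tot; apply/eqP; rewrite subr_eq0; apply/eqP.
  by apply: (addrI (n * n)); rewrite -tot.
have H2 := psumr_eq0P _ H1 unz.
have H3 : \sum_(y : F) ((dlt u y)%:Z - 2%N%:Z) = 0.
  apply: H2 => v vnz; apply: sumr_ge0 => y _.
  by rewrite subr_ge0 lez_nat dlt_ge2.
have nn : forall y, predT y -> 0 <= (dlt u y)%:Z - 2%N%:Z.
  by move=> y _; rewrite subr_ge0 lez_nat dlt_ge2.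
have H4 := psumr_eq0P nn H3 (isT : predT x).
have := dlt_ge2 x unz.
move: H4 => /= H4; lia.
Qed.



Let trF_add' := trF_add cardF.
Let trF01' := trF01 cardF m_gt0.

Lemma apn_pair (p q : F) : p != q ->
  #|[set z | g z + g (z + (p + q)) == g p + g q]| = 2%N.
Proof.
move=> pq.
have unz : p + q != 0 by rewrite eqF_add0'.
have := apn p unz; rewrite /dlt.
by rewrite (_ : p + (p + q) = q) // addrA addxx' add0r.
Qed.

Lemma apn_triple (p q r : F) : p != q -> p != r -> q != r ->
  g p + g q + g r + g (p + q + r) != 0.
Proof.
move=> pq pr qr; apply/negP => /eqP H.
have S2 := apn_pair pq.
set S := [set z | _] in S2.
have pS : p \in S.
  rewrite inE (_ : p + (p + q) = q) //; by rewrite addrA addxx' add0r.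
have qS : q \in S.
  rewrite inE (_ : q + (p + q) = p); last by rewrite addrCA addxx' addr0.
  by rewrite addrC.
have rS : r \in S.
  rewrite inE (_ : r + (p + q) = p + q + r); last by rewrite addrC.
  rewrite eq_sym -eqF_add0' addrA; by apply/eqP.
have : (#|p |: (q |: [set r])| <= #|S|)%N.
  apply: subset_leq_card; apply/subsetP => z /setU1P [->|/setU1P [->|/set1P ->]] //.
by rewrite !cardsU1 cards1 !inE (negbTE pq) (negbTE pr) (negbTE qr) S2.
Qed.

Lemma tr2_add (x y : F) : tr2 m (x + y) = tr2 m x + tr2 m y.
Proof.
rewrite /tr2 trF_add'.
case/orP: (trF01' x) => /eqP->; case/orP: (trF01' y) => /eqP->;
  rewrite ?addr0 ?add0r ?addxx' ?eqxx ?oner_eq0 /= ?addr0 ?add0r //.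
by apply/eqP.
Qed.

Lemma tr2_0 : tr2 m (0 : F) = 0.
Proof. by rewrite /tr2 trF0 eqxx. Qed.

Lemma eps_tr2 (y : F) : eps (tr2 m y) = ech m y.
Proof. by rewrite /tr2 /ech; case: ifP. Qed.

Lemma cw_add (a b a' b' : F) :
  cw m g a b + cw m g a' b' = cw m g (a + a') (b + b').
Proof.
apply/ffunP => i; rewrite !ffunE -tr2_add; congr (tr2 m _); ring.
Qed.

Variable A : {set F}.
Hypothesis A0 : 0 \in A.
Hypothesis Aadd : forall x y, x \in A -> y \in A -> x + y \in A.

Lemma gA_subgrp : subgrp (code_gA m g A).
Proof.
split.
  have -> : 0 = cw m g 0 0.
    by apply/ffunP => i; rewrite !ffunE !mul0r addr0 tr2_0.
  exact: imset2_f.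
move=> x y /imset2P [a b aA _ ->] /imset2P [a' b' a'A _ ->].
by rewrite cw_add; apply: imset2_f => //; exact: Aadd.
Qed.

Lemma dotw_ext (x : word (nzF F)) (w : word (option (nzF F))) :
  dotw (extend_word x) w = dotw x (restr w).
Proof.
rewrite /dotw /extend_word /restr sum_option ffunE /=.
rewrite [X in _ + X = _](eq_bigr (fun i => x i * w (Some i))); last by move=> i _; rewrite ffunE.
rewrite [RHS](eq_bigr (fun i => x i * (w (Some i) + w None))); last by move=> i _; rewrite ffunE.
rewrite mulr_suml -big_split; apply: eq_bigr => i _.
by rewrite mulrDr addrC.
Qed.

Lemma memD (w : word (option (nzF F))) :
  (w \in code_D m g A) = (restr w \in code_gA m g A).
Proof.
rewrite /code_D -{2}(dual_dual gA_subgrp) !inE.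
apply/forall_inP/forall_inP => [H x xC | H z].
  by rewrite -dotw_ext; apply: H; apply: imset_f.
by case/imsetP => x xC ->; rewrite dotw_ext; apply: H.
Qed.

Lemma D_eq : code_D m g A = Phi' m g @: dom A.
Proof.
apply/setP => w; rewrite memD.
apply/imset2P/imsetP => [[a b aA _ Hw]|[[[a b] t]]].
  exists ((a, b), w None); first by rewrite inE.
  apply/ffunP => o; rewrite /Phi' /PhiW ffunE /=.
  case: o => [i|] /=.
    have := congr1 (fun f : word (nzF F) => f i) Hw; rewrite !ffunE => <-.
    by rewrite F2addK.
  by rewrite g0 !mulr0 addr0 tr2_0 add0r.
rewrite inE /= => aA ->.
have -> : restr (Phi' m g ((a, b), t)) = cw m g a b.
  apply/ffunP => i; rewrite !ffunE /= g0 !mulr0 addr0 tr2_0 add0r.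
  by rewrite F2addK.
by apply/imset2P; apply: imset2_f.
Qed.

Lemma phi_psi (x : F) : phiP (insub x : option (nzF F)) = x.
Proof. by case: insubP => [y _ <- //|/negPn/eqP -> //]. Qed.

Lemma Phi_inj : injective (Phi' m g).
Proof.
move=> [[a b] t] [[a' b'] t'] H.
have Ht : t = t'.
  have := congr1 (fun f : word (option (nzF F)) => f None) H.
  by rewrite /Phi' /PhiW !ffunE /= g0 !mulr0 !addr0 tr2_0 !add0r.
have He : forall x, ech m (a * g x + b * x) = ech m (a' * g x + b' * x).
  move=> x; have := congr1 (fun f : word (option (nzF F)) => f (insub x)) H.
  rewrite /Phi' /PhiW !ffunE /= phi_psi Ht => /addIr E.
  by rewrite -!eps_tr2 E.
have Wn : W (a + a') (b + b') = n.
  rewrite /walsh (eq_bigr (fun _ => 1)); first by rewrite sumr_const natz.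
  move=> x _.
  change (ech m ((a + a') * g x + (b + b') * x) = 1).
  rewrite (_ : (a + a') * g x + (b + b') * x = (a * g x + b * x) + (a' * g x + b' * x)); last by ring.
  by rewrite echD' He echM'.
have aa : a = a'.
  apply/eqP; rewrite -eqF_add0'; apply/negPn/negP => nz.
  have := s_lt_n; have := n_gt0.
  by case/or3P: (Wvals (b + b') nz); rewrite Wn /sW => /eqP; lia.
have bb : b = b'.
  move: Wn; rewrite aa addxx' W0; case: eqP => [E _|_ E].
    by apply/eqP; rewrite -eqF_add0' E.
  by have := n_gt0; lia.
by rewrite aa bb Ht.
Qed.

Lemma sum_phi (f : F -> int) : \sum_o f (phiP o) = \sum_x f x.
Proof.
symmetry; rewrite (reindex (@phiP F)) //.
exists insub => [o _|x _]; last exact: phi_psi.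
case: o => [i|] /=; first exact: valK.
by rewrite insubF // eqxx.
Qed.

Lemma card_P : #|{: option (nzF F)}| = #|F|.
Proof. by rewrite card_option card_sig cardC1 prednK // n_gt0. Qed.

Lemma wtPhi (a b : F) (t : 'F_2) :
  n - 2 * (wt (PhiW m g a b t))%:Z = eps t * W a b.
Proof.
rewrite /wt /Defs.support card_sumZ' -card_P.
transitivity (\sum_o eps (PhiW m g a b t o)).
  rewrite [RHS](eq_bigr (fun o => 1 - 2 * (PhiW m g a b t o != 0)%:Z)); last first.
    by move=> o _; rewrite eps_nz.
  rewrite sumrB -mulr_sumr sumr_const; congr (_ - _); symmetry; exact: natz.
under eq_bigr => o _ do rewrite ffunE epsD eps_tr2.
rewrite -mulr_suml mulrC; congr (_ * _).
by rewrite (sum_phi (fun x => ech m (a * g x + b * x))).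
Qed.

Lemma card_D (Q : pred (word (option (nzF F)))) :
  #|[set c in code_D m g A | Q c]| = #|[set tau in dom A | Q (Phi' m g tau)]|.
Proof.
rewrite D_eq -(card_imset _ Phi_inj); apply: eq_card => c.
rewrite inE; apply/andP/imsetP => [[/imsetP [tau td ->] Qc]|[tau]].
  by exists tau => //; rewrite inE td.
by rewrite inE => /andP [td Qt] ->; split => //; apply: imset_f.
Qed.



Definition sg (tau : F * F * 'F_2) : int := eps tau.2 * W tau.1.1 tau.1.2.

Arguments sg : simpl never.

Definition jf (j : bool) (t : 'F_2) : int := if j then eps t else 1.

Definition us (j : bool) (G P : F) (v : int) (tau : F * F * 'F_2) : int :=
  (sg tau == v)%:Z * jf j tau.2 * ech m (tau.1.1 * G + tau.1.2 * P).

Definition U (j : bool) (G P : F) (v : int) : int := \sum_(tau in dom A) us j G P v tau.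

Definition Ua (j : bool) (G P : F) (v : int) (a : F) : int :=
  \sum_b \sum_t us j G P v (a, b, t).
Arguments U : simpl never.
Arguments Ua : simpl never.

Lemma sum_dom (f : F * F * 'F_2 -> int) :
  \sum_(tau in dom A) f tau = \sum_(a in A) \sum_b \sum_t f (a, b, t).
Proof.
rewrite pair_big pair_big /=; apply: eq_big => [[[a b] t]|[[a b] t] _] //=.
by rewrite inE /= !andbT.
Qed.

Lemma U_split j G P v : U j G P v = Ua j G P v 0 + \sum_(a in A | a != 0) Ua j G P v a.
Proof. by rewrite /U sum_dom (bigD1 0). Qed.

Local Notation c0 v := ((v == 0)%:Z).
Local Notation cp v := ((v == s)%:Z).
Local Notation cm v := ((v == - s)%:Z).

Definition Zt (j : bool) (v : int) : int := \sum_t (eps t * n == v)%:Z * jf j t.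
Arguments Zt : simpl never.

Lemma sum_b_nz (P : F) : \sum_(b | b != 0) ech m (b * P) = (if P == 0 then n else 0) - 1.
Proof.
have := orth' P; rewrite (bigD1 0) //= mul0r ech0 => <-.
by rewrite addrC addrK.
Qed.

Lemma sum_a_nz (c : F) : \sum_(a | a != 0) ech m (a * c) = (if c == 0 then n else 0) - 1.
Proof. exact: sum_b_nz. Qed.

Lemma Ua0_val j G P v :
  Ua j G P v 0 = Zt j v + c0 v * (if j then 0 else 2) * ((if P == 0 then n else 0) - 1).
Proof.
rewrite /Ua (bigD1 0) //=; congr (_ + _).
  rewrite /Zt; apply: eq_bigr => t _; rewrite /us /sg /= W0 eqxx !mul0r addr0 ech0 mulr1.
  by [].
rewrite -sum_b_nz mulr_sumr; apply: eq_bigr => b bnz.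
rewrite (eq_bigr (fun t => (0 == v)%:Z * jf j t * ech m (b * P))); last first.
  by move=> t _; rewrite /us /sg /= W0 (negbTE bnz) /= mulr0 mul0r add0r.
rewrite -mulr_suml; congr (_ * _).
by rewrite sumF2 /jf eq_sym; case: j; rewrite ?eps0 ?eps1; ring.
Qed.

Lemma tsum_odd (w v : int) : [|| w == 0, w == s | w == - s] ->
  s * \sum_t (eps t * w == v)%:Z * eps t = (cp v - cm v) * w.
Proof.
rewrite sumF2 eps0 eps1 !mul1r !mulN1r !mulr1.
case/or3P => /eqP ->; rewrite ?oppr0 ?opprK ![_ == v]eq_sym; ring.
Qed.

Lemma tsum_even (w v : int) : [|| w == 0, w == s | w == - s] ->
  s * s * \sum_t (eps t * w == v)%:Z =
  2 * s * s * c0 v + (cp v + cm v - 2 * c0 v) * w ^+ 2.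
Proof.
rewrite sumF2 eps0 eps1 !mul1r !mulN1r.
case/or3P => /eqP ->; rewrite ?oppr0 ?opprK ![_ == v]eq_sym; ring.
Qed.

Lemma Ua_odd G P v a : a != 0 ->
  s * Ua true G P v a = (cp v - cm v) * n * ech m (a * (G + g P)).
Proof.
move=> anz.
rewrite /Ua mulr_sumr.
transitivity (\sum_b (cp v - cm v) * ech m (a * G) * (W a b * ech m (b * P))).
  apply: eq_bigr => b _.
  rewrite (eq_bigr (fun t => (sg (a, b, t) == v)%:Z * eps t * ech m (a * G + b * P))) //.
  rewrite -mulr_suml mulrA /sg /= tsum_odd ?Wvals // echD'; ring.
rewrite -mulr_sumr.
under eq_bigr => b _ do rewrite walshE.
by rewrite fourier_inv' mulrDr echD'; ring.
Qed.

Lemma Ua_even G P v a : a != 0 ->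
  s * s * Ua false G P v a =
  ech m (a * G) * (2 * s * s * c0 v * (if P == 0 then n else 0) +
                   (cp v + cm v - 2 * c0 v) * n * Rac a P).
Proof.
move=> anz.
rewrite /Ua mulr_sumr.
have Wv : forall b, [|| W a b == 0, W a b == s | W a b == - s] by move=> b; exact: Wvals.
transitivity (\sum_b ech m (a * G) * ((2 * s * s * c0 v) * ech m (b * P) +
   (cp v + cm v - 2 * c0 v) * (fourier m (Rac a) b * ech m (b * P)))).
  apply: eq_bigr => b _.
  rewrite (eq_bigr (fun t => (sg (a, b, t) == v)%:Z * ech m (a * G + b * P))); last first.
    by move=> t _; rewrite /us /jf mulr1.
  rewrite -mulr_suml mulrA /sg /= tsum_even // -walsh_sq echD'; ring.
rewrite -mulr_sumr big_split /= -!mulr_sumr orth' fourier_inv'.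
by rewrite -[in RHS](mulrA _ n).
Qed.



Lemma sum_A_nz_const (c : int) : \sum_(a in A | a != 0) c = c * (#|A|%:Z - 1).
Proof.
have H := cardsD1 0 A; rewrite A0 /= add1n in H.
rewrite sumr_const (@eq_card _ _ (A :\ 0)); last by move=> a; rewrite !inE andbC.
by rewrite -mulr_natr natz; congr (_ * _); rewrite H -addn1 PoszD addrK.
Qed.

Lemma U_count v : s * s * U false 0 0 v =
  s * s * (Zt false v + c0 v * 2 * (n - 1)) +
  (#|A|%:Z - 1) * (2 * s * s * c0 v * n + (cp v + cm v - 2 * c0 v) * n * n).
Proof.
rewrite U_split mulrDr Ua0_val eqxx /=.
rewrite mulr_sumr (eq_bigr (fun _ => 2 * s * s * c0 v * n + (cp v + cm v - 2 * c0 v) * n * n)); last first.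
  by move=> a /andP [_ anz]; rewrite Ua_even // mulr0 ech0 mul1r Rac0 eqxx; ring.
rewrite (sum_A_nz_const (2 * s * s * c0 v * n + (cp v + cm v - 2 * c0 v) * n * n)); ring.
Qed.

Lemma U_single v x : s * U true (g x) x v =
  s * Zt true v + (#|A|%:Z - 1) * ((cp v - cm v) * n).
Proof.
rewrite U_split mulrDr Ua0_val /= mulr0 mul0r addr0.
rewrite [X in _ + X = _]mulr_sumr (eq_bigr (fun _ => (cp v - cm v) * n)); last first.
  by move=> a /andP [_ anz]; rewrite Ua_odd // addxx' mulr0 ech0 mulr1.
by rewrite (sum_A_nz_const ((cp v - cm v) * n)); ring.
Qed.

Lemma sumAT (f : F -> int) : A = setT ->
  \sum_(a in A | a != 0) f a = \sum_(a | a != 0) f a.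
Proof. by move=> ->; apply: eq_bigl => a; rewrite in_setT. Qed.

Lemma U_pair v x y : A = setT -> x != y ->
  s * s * U false (g x + g y) (x + y) v =
  s * s * (Zt false v - c0 v * 2) + (cp v + cm v - 2 * c0 v) * n * n.
Proof.
move=> AT xy.
have Pnz : (x + y == 0) = false by apply/negbTE; rewrite eqF_add0'.
rewrite U_split mulrDr Ua0_val Pnz /= [X in _ + X = _]mulr_sumr sumAT //.
rewrite (eq_bigr (fun a => (cp v + cm v - 2 * c0 v) * n *
    (ech m (a * (g x + g y)) * Rac a (x + y)))); last first.
  by move=> a anz; rewrite Ua_even // Pnz mulr0 add0r; ring.
rewrite -mulr_sumr.
have -> : \sum_(a | a != 0) ech m (a * (g x + g y)) * Rac a (x + y) = n.
  transitivity (\sum_(a | a != 0) \sum_z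
      ech m (a * ((g x + g y) + (g z + g (z + (x + y)))))).
    apply: eq_bigr => a _; rewrite RacE mulr_sumr; apply: eq_bigr => z _.
    by rewrite -echD' -mulrDr.
  rewrite exchange_big /=.
  under eq_bigr => z _ do rewrite sum_a_nz.
  have e1 : \sum_z (if (g x + g y) + (g z + g (z + (x + y))) == 0 then n else 0) = n + n.
    rewrite -big_mkcond /=.
    rewrite (eq_bigl (fun z => z \in [set z | g z + g (z + (x + y)) == g x + g y])); last first.
      by move=> z; rewrite inE eqF_add0' eq_sym.
    by rewrite sumr_const apn_pair // mulr2n.
  have e2 : \sum_(z : F) (1 : int) = n by rewrite sumr_const natz.
  rewrite sumrB e1.
  have -> : \sum_(i : F) (1 : int) = n by [].
  ring.
ring.
Qed.

Lemma U_triple v x y z : A = setT -> x != y -> x != z -> y != z ->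
  s * U true (g x + g y + g z) (x + y + z) v = s * Zt true v - (cp v - cm v) * n.
Proof.
move=> AT xy xz yz.
rewrite U_split mulrDr Ua0_val /= mulr0 mul0r addr0 [X in _ + X = _]mulr_sumr sumAT //.
rewrite (eq_bigr (fun a => (cp v - cm v) * n * ech m (a * (g x + g y + g z + g (x + y + z))))); last first.
  by move=> a anz; rewrite Ua_odd.
by rewrite -mulr_sumr sum_a_nz (negbTE (apn_triple xy xz yz)) /=; ring.
Qed.

Lemma wk_eq (a b : F) (t : 'F_2) (k : nat) :
  (wt (Phi' m g (a, b, t)) == k) = (sg (a, b, t) == n - 2 * k%:Z).
Proof.
rewrite /sg /Phi' /= -wtPhi.
apply/eqP/eqP => [->//|H].
have H2 := oppr_inj (addrI _ H).
have two : (2 : int) != 0 by [].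
by case: (mulfI two H2).
Qed.

Lemma wdist_U k : (wdist (code_D m g A) k)%:Z = U false 0 0 (n - 2 * k%:Z).
Proof.
rewrite /wdist card_D card_sumZ /U; apply: eq_bigr => [[[a b] t]] _.
by rewrite /us /jf /= !mulr0 addr0 ech0 !mulr1 wk_eq.
Qed.



Lemma bool_andZ (b1 b2 : bool) : (b1 && b2)%:Z = b1%:Z * b2%:Z.
Proof. by case: b1; case: b2. Qed.

Lemma two_u (z : 'F_2) : 2 * (z != 0)%:Z = 1 - eps z.
Proof. by rewrite eps_nz; ring. Qed.

Lemma echPQ (a b x y : F) :
  ech m (a * (g x + g y) + b * (x + y)) = ech m (a * g x + b * x) * ech m (a * g y + b * y).
Proof. by rewrite -echD'; congr (ech m _); ring. Qed.

Lemma echPQR (a b x y z : F) :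
  ech m (a * (g x + g y + g z) + b * (x + y + z)) =
  ech m (a * g x + b * x) * ech m (a * g y + b * y) * ech m (a * g z + b * z).
Proof. by rewrite -!echD'; congr (ech m _); ring. Qed.

Lemma N1_U k (p : option (nzF F)) (x : F) (v : int) :
  phiP p = x -> v = n - 2 * k%:Z ->
  2 * (#|[set bl in blocks (code_D m g A) k | [set p] \subset bl]|)%:Z =
  U false 0 0 v - U true (g x) x v.
Proof.
move=> hx hv.
rewrite card_blocks card_D card_sumZ /U -sumrB mulr_sumr.
apply: eq_bigr => [[[a b] t]] _.
rewrite wk_eq sub1set /Defs.support inE bool_andZ mulrCA two_u.
rewrite /Phi' /PhiW ffunE epsD eps_tr2 /us /jf /= hx -hv !mulr0 addr0 ech0.
ring.
Qed.

Lemma N3_U k (p q r : option (nzF F)) (x y z : F) (v : int) :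
  phiP p = x -> phiP q = y -> phiP r = z -> v = n - 2 * k%:Z ->
  8 * (#|[set bl in blocks (code_D m g A) k | p |: (q |: [set r]) \subset bl]|)%:Z =
  U false 0 0 v - U true (g x) x v - U true (g y) y v - U true (g z) z v
  + U false (g x + g y) (x + y) v + U false (g x + g z) (x + z) v
  + U false (g y + g z) (y + z) v - U true (g x + g y + g z) (x + y + z) v.
Proof.
move=> hx hy hz hv.
rewrite card_blocks card_D card_sumZ mulr_sumr /U.
rewrite (eq_bigr (fun tau =>
  us false 0 0 v tau - us true (g x) x v tau - us true (g y) y v tau - us true (g z) z v tau
  + us false (g x + g y) (x + y) v tau + us false (g x + g z) (x + z) v tau
  + us false (g y + g z) (y + z) v tau - us true (g x + g y + g z) (x + y + z) v tau)); last first.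
  move=> [[a b] t] _.
  rewrite wk_eq !subUset !sub1set /Defs.support !inE !bool_andZ -hv.
  set c := (sg (a, b, t) == v)%:Z.
  transitivity (c * ((2 * (Phi' m g (a, b, t) p != 0)%:Z) * (2 * (Phi' m g (a, b, t) q != 0)%:Z)
     * (2 * (Phi' m g (a, b, t) r != 0)%:Z))); first ring.
  rewrite !two_u /Phi' /PhiW !ffunE !epsD !eps_tr2 /us /jf /= hx hy hz -/c.
  rewrite echPQR !echPQ !mulr0 addr0 ech0.
  by case: (F2cases t) => ->; rewrite ?eps0 ?eps1; ring.
by rewrite sumrB big_split big_split big_split sumrB sumrB sumrB.
Qed.



Lemma phiK : cancel (@phiP F) insub.
Proof.
case=> [i|] /=; first exact: valK.
by rewrite insubF // eqxx.
Qed.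

Lemma hn : n = 2 * (2 ^ m.-1)%N%:Z.
Proof. by rewrite cardF -{1}(prednK m_gt0) expnS PoszM. Qed.

Lemma ss0 : s * s != 0.
Proof. by rewrite s2; apply/eqP; have := n_gt0; lia. Qed.

Lemma U0_val v : U false 0 0 v =
  (n == v)%:Z + (- n == v)%:Z + 2 * c0 v * (n - 1) +
  (#|A|%:Z - 1) * (2 * c0 v * n + (cp v + cm v - 2 * c0 v) * (2 ^ m.-1)%N%:Z).
Proof.
apply: (mulfI ss0).
have s2' : s * s = 2 * n by rewrite s2 PoszM.
rewrite U_count /Zt sumF2 /jf eps0 eps1 mul1r mulN1r !mulr1 -(mulrA 2 s s) s2' hn.
ring.
Qed.

Definition E3 (v : int) : int :=
  s * s * (Zt false v + c0 v * 2 * (n - 1)) +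
  (#|A|%:Z - 1) * (2 * s * s * c0 v * n + (cp v + cm v - 2 * c0 v) * n * n)
  - 3 * (s * Zt true v + (#|A|%:Z - 1) * ((cp v - cm v) * n)) * s
  + 3 * (s * s * (Zt false v - c0 v * 2) + (cp v + cm v - 2 * c0 v) * n * n)
  - s * (s * Zt true v - (cp v - cm v) * n).

Definition E1 (v : int) : int :=
  s * s * (Zt false v + c0 v * 2 * (n - 1)) +
  (#|A|%:Z - 1) * (2 * s * s * c0 v * n + (cp v + cm v - 2 * c0 v) * n * n)
  - s * (s * Zt true v + (#|A|%:Z - 1) * ((cp v - cm v) * n)).

Lemma N3_val k (S : {set option (nzF F)}) : A = setT -> #|S| = 3%N ->
  s * s * (8 * (#|[set bl in blocks (code_D m g A) k | S \subset bl]|)%:Z) =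
  E3 (n - 2 * k%:Z).
Proof.
move=> AT /card3P [p [q [r [pq pr qr ->]]]].
have inj := can_inj phiK.
have xy : phiP p != phiP q by rewrite (inj_eq inj).
have xz : phiP p != phiP r by rewrite (inj_eq inj).
have yz : phiP q != phiP r by rewrite (inj_eq inj).
rewrite (N3_U (erefl (phiP p)) (erefl (phiP q)) (erefl (phiP r)) (erefl _)).
set v := n - 2 * k%:Z.
set x := phiP p; set y := phiP q; set z := phiP r.
transitivity (s * s * U false 0 0 v - s * (s * U true (g x) x v) - s * (s * U true (g y) y v)
  - s * (s * U true (g z) z v) + s * s * U false (g x + g y) (x + y) v
  + s * s * U false (g x + g z) (x + z) v + s * s * U false (g y + g z) (y + z) v
  - s * (s * U true (g x + g y + g z) (x + y + z) v)); first ring.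
rewrite U_count !U_single !U_pair // U_triple //.
by rewrite /E3; ring.
Qed.

Lemma N1_val k (S : {set option (nzF F)}) : #|S| = 1%N ->
  s * s * (2 * (#|[set bl in blocks (code_D m g A) k | S \subset bl]|)%:Z) =
  E1 (n - 2 * k%:Z).
Proof.
move=> /eqP /cards1P [p ->].
rewrite (N1_U (erefl (phiP p)) (erefl _)).
set v := n - 2 * k%:Z.
transitivity (s * s * U false 0 0 v - s * (s * U true (g (phiP p)) (phiP p) v)); first ring.
by rewrite U_count U_single /E1.
Qed.



Ltac bdec := repeat match goal with
  |- context [(?x == ?y :> int)] =>
     first [ rewrite (_ : (x == y) = true); last by apply/eqP; lia
           | rewrite (_ : (x == y) = false); last by apply/negbTE/eqP; lia ]
  end.

Lemma wdist_main (r : nat) : #|A| = (2 ^ r)%N -> (1 <= r <= m)%N ->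
  let D := code_D m g A in
  let h := ((m - 1) %/ 2)%N in
  forall k : nat,
     wdist D k =
       (if k == 0%N then 1
        else if k == (2 ^ m.-1 - 2 ^ h)%N then 2 ^ m.-1 * (2 ^ r - 1)
        else if k == (2 ^ m.-1)%N then 2 ^ (m + r) + 2 ^ m - 2
        else if k == (2 ^ m.-1 + 2 ^ h)%N then 2 ^ m.-1 * (2 ^ r - 1)
        else if k == (2 ^ m)%N then 1
        else 0)%N.
Proof.
move=> hA hr D h k.
have hN : #|F| = (2 * 2 ^ m.-1)%N by rewrite cardF -{1}(prednK m_gt0) expnS.
have hmodd : (m %% 2 = 1)%N by rewrite modn2 m_odd.
have hs : s = (2 * 2 ^ h)%N%:Z.
  rewrite /sW /h; congr Posz.
  have -> : (m.+1 %/ 2 = ((m - 1) %/ 2).+1)%N by lia.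
  by rewrite expnS.
have hhN : (2 ^ h < 2 ^ m.-1)%N by rewrite ltn_exp2l //; rewrite /h; lia.
have hh0 : (0 < 2 ^ h)%N by rewrite expn_gt0.
have hmr : (2 ^ (m + r) = 2 * 2 ^ m.-1 * 2 ^ r)%N.
  by rewrite expnD -{1}(prednK m_gt0) expnS.
have h2m : (2 ^ m = 2 * 2 ^ m.-1)%N by rewrite -{1}(prednK m_gt0) expnS.
have hr1 : (1 <= 2 ^ r)%N by rewrite expn_gt0.
have hle : (2 ^ m.-1 <= 2 ^ m.-1 * 2 ^ r)%N by rewrite leq_pmulr.
apply/eqP; rewrite -eqz_nat; apply/eqP.
rewrite /D wdist_U U0_val hA hmr h2m !mulnBr !muln1.
have [v Ev] : exists v, v = n - 2 * k%:Z by eexists.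
rewrite -Ev.
move: hhN hh0 hle hr1 hN hs Ev.
move: (2 ^ m.-1)%N (2 ^ h)%N (2 ^ r)%N => N2 H2 R2.
move=> hhN hh0 hle hr1 hN hs Ev.
rewrite hs hN.
repeat case: ifP => [/eqP ?|/negbT/eqP ?]; bdec; rewrite /=; lia.
Qed.



Lemma design_main (r : nat) : #|A| = (2 ^ r)%N ->
  let D := code_D m g A in
  forall k : nat,
     let B := blocks D k in
     (forall b, b \in B -> #|b| = k) /\
     (r = m ->
        forall S : {set option (nzF F)}, #|S| = 3%N ->
          (#|[set b in B | S \subset b]|%:R : rat) =
            (k * (k - 1) * (k - 2) * wdist D k)%:R /
            (2 ^ m * (2 ^ m - 1) * (2 ^ m - 2))%:R) /\
     (r <> m ->
        forall S : {set option (nzF F)}, #|S| = 1%N ->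
          (#|[set b in B | S \subset b]|%:R : rat) =
            (k * wdist D k)%:R / (2 ^ m)%:R).
Proof.
move=> hA D k B.
have h8 : (8 <= 2 ^ m)%N by rewrite (_ : 8 = 2 ^ 3)%N // leq_exp2l.
split; first by move=> b; exact: blocks_card.
split.
  move=> rm S S3.
  have AT : A = setT.
    by apply/eqP; rewrite eqEcard subsetT cardsT hA rm cardF leqnn.
  have n8 : (8 : int) != 0 by [].
  have Hc : forall S1 S2 : {set option (nzF F)}, #|S1| = 3%N -> #|S2| = 3%N ->
      #|[set b in B | S1 \subset b]| = #|[set b in B | S2 \subset b]|.
    move=> S1 S2 h1 h2.
    have e1 := N3_val k AT h1; have e2 := N3_val k AT h2.
    have := etrans e1 (esym e2).
    by move/(mulfI ss0)/(mulfI n8)/eqP; rewrite eqz_nat => /eqP.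
  have dc := double_count (@blocks_card _ D k) Hc S3.
  rewrite card_P card_blocks_all cardF -/B in dc.
  have f3 : forall x, (x * (x - 1) * (x - 2) = 'C(x, 3) * 6)%N.
    move=> x; rewrite (_ : 6 = 3`!)%N // bin_ffact !ffactnS ffactn0 muln1 mulnA.
    by rewrite -!subn1 -subnDA.
  have key : (#|[set b in B | S \subset b]| * (2 ^ m * (2 ^ m - 1) * (2 ^ m - 2)) =
              k * (k - 1) * (k - 2) * wdist D k)%N.
    rewrite !f3; lia.
  have Y0 : (0 < 2 ^ m * (2 ^ m - 1) * (2 ^ m - 2))%N.
    by rewrite !muln_gt0 !subn_gt0 expn_gt0 /= ?(leq_trans _ h8).
  by rewrite -key natrM mulfK // pnatr_eq0 -lt0n.
move=> _ S S1.
have n2 : (2 : int) != 0 by [].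
have Hc : forall S1 S2 : {set option (nzF F)}, #|S1| = 1%N -> #|S2| = 1%N ->
    #|[set b in B | S1 \subset b]| = #|[set b in B | S2 \subset b]|.
  move=> T1 T2 h1 h2.
  have e1 := N1_val k h1; have e2 := N1_val k h2.
  have := etrans e1 (esym e2).
  by move/(mulfI ss0)/(mulfI n2)/eqP; rewrite eqz_nat => /eqP.
have dc := double_count (@blocks_card _ D k) Hc S1.
rewrite card_P card_blocks_all cardF !bin1 -/B in dc.
have key : (#|[set b in B | S \subset b]| * 2 ^ m = k * wdist D k)%N.
  by rewrite dc mulnC.
have Y0 : (0 < 2 ^ m)%N by rewrite expn_gt0.
by rewrite -key natrM mulfK // pnatr_eq0 -lt0n.
Qed.

End Walsh.

Unset Implicit Arguments.

Theorem theorem6 (F : finFieldType) (m r : nat) (g : F -> F) (A : {set F}) :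
  (3 <= m)%N -> odd m -> #|F| = (2 ^ m)%N ->
  almost_bent m g -> g 0 = 0 ->
  0 \in A -> (forall x y, x \in A -> y \in A -> x + y \in A) ->
  #|A| = (2 ^ r)%N -> (1 <= r <= m)%N ->
  let D := code_D m g A in
  let h := ((m - 1) %/ 2)%N in
  (forall k : nat,
     wdist D k =
       (if k == 0%N then 1
        else if k == (2 ^ m.-1 - 2 ^ h)%N then 2 ^ m.-1 * (2 ^ r - 1)
        else if k == (2 ^ m.-1)%N then 2 ^ (m + r) + 2 ^ m - 2
        else if k == (2 ^ m.-1 + 2 ^ h)%N then 2 ^ m.-1 * (2 ^ r - 1)
        else if k == (2 ^ m)%N then 1
        else 0)%N) /\
  (forall k : nat, wdist D k <> 0%N ->
     let B := blocks D k in
     (forall b, b \in B -> #|b| = k) /\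
     (r = m ->
        forall S : {set option (nzF F)}, #|S| = 3%N ->
          (#|[set b in B | S \subset b]|%:R : rat) =
            (k * (k - 1) * (k - 2) * wdist D k)%:R /
            (2 ^ m * (2 ^ m - 1) * (2 ^ m - 2))%:R) /\
     (r <> m ->
        forall S : {set option (nzF F)}, #|S| = 1%N ->
          (#|[set b in B | S \subset b]|%:R : rat) =
            (k * wdist D k)%:R / (2 ^ m)%:R)).
Proof.
move=> m3 modd cF AB g0 A0 Aadd hA hr D h.
split.
  by move=> k; apply: (wdist_main cF m3 modd AB g0 A0 Aadd hA hr).
by move=> k _; apply: (design_main cF m3 modd AB g0 A0 Aadd hA).
Qed.
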